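(* Let $L$ be a C-lattice domain in which every element is a join of principal elements. If $L$ is sharp, then $L$ is a Prüfer lattice, i.e. every compact element of $L$ is principal.
   Context: A multiplicative lattice is a complete lattice $(L,\le)$ with bottom $0$ and top $1$ which is also a commutative monoid with identity $1$ such that $a(\bigvee_\alpha b_\alpha)=\bigvee_\alpha(ab_\alpha)$ for all $a,b_\alpha\in L$. For $x,y\in L$, $(y:x)=\bigvee\{a\in L: ax\le y\}$. An element $c$ is compact if $c\le\bigvee S$ implies $c\le\bigvee T$ for some finite $T\subseteq S$. A C-lattice is a multiplicative lattice in which $1$ is compact, the product of two compact elements is compact, and every element is a join of compact elements. A proper element $p\ne1$ is prime if $xy\le p$ implies $x\le p$ or $y\le p$; $L$ is a domain if $0$ is prime. An element $x$ is principal if $y\wedge zx=((y:x)\wedge z)x$ and $y\vee(z:x)=((yx\vee z):x)$ for all $y,z\in L$. $L$ is sharp if whenever $a_1a_2\le b$ with $a_1,a_2,b\in L$, there exist $b_1,b_2\in L$ with $a_i\le b_i$ ($i=1,2$) and $b=b_1b_2$. *)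

(* Defs.v *)
From Stdlib Require Import List.

Record mult_lattice := MultLattice {
  car :> Type;
  le : car -> car -> Prop;
  sup : (car -> Prop) -> car;
  mul : car -> car -> car;
  zero : car;
  one : car;
  le_refl : forall x, le x x;
  le_trans : forall x y z, le x y -> le y z -> le x z;
  le_antisym : forall x y, le x y -> le y x -> x = y;
  sup_ub : forall (S : car -> Prop) x, S x -> le x (sup S);
  sup_least : forall (S : car -> Prop) y, (forall x, S x -> le x y) -> le (sup S) y;
  zero_bot : forall x, le zero x;
  one_top : forall x, le x one;
  mulA : forall x y z, mul x (mul y z) = mul (mul x y) z;
  mulC : forall x y, mul x y = mul y x;
  mul1 : forall x, mul one x = x;
  mul_sup : forall a (S : car -> Prop),
      mul a (sup S) = sup (fun z => exists s, S s /\ z = mul a s)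
}.

Section Notions.
Variable L : mult_lattice.

Definition ljoin (x y : L) : L := sup L (fun z => z = x \/ z = y).
Definition lmeet (x y : L) : L := sup L (fun z => le L z x /\ le L z y).

Definition res (y x : L) : L := sup L (fun a => le L (mul L a x) y).

Definition compact (c : L) : Prop :=
  forall S : L -> Prop, le L c (sup L S) ->
    exists T : list L, (forall t, In t T -> S t) /\
                       le L c (sup L (fun t => In t T)).

Definition C_lattice : Prop :=
  compact (one L) /\
  (forall a b, compact a -> compact b -> compact (mul L a b)) /\
  (forall x : L, exists S : L -> Prop, (forall s, S s -> compact s) /\ x = sup L S).

Definition prime (p : L) : Prop :=
  p <> one L /\ forall x y, le L (mul L x y) p -> le L x p \/ le L y p.

Definition lattice_domain : Prop := prime (zero L).

Definition principal (x : L) : Prop :=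
  (forall y z, lmeet y (mul L z x) = mul L (lmeet (res y x) z) x) /\
  (forall y z, ljoin y (res z x) = res (ljoin (mul L y x) z) x).

Definition sharp : Prop :=
  forall a1 a2 b, le L (mul L a1 a2) b ->
    exists b1 b2, le L a1 b1 /\ le L a2 b2 /\ b = mul L b1 b2.

Definition principally_generated : Prop :=
  forall x : L, exists S : L -> Prop, (forall s, S s -> principal s) /\ x = sup L S.

Definition prufer : Prop := forall c : L, compact c -> principal c.

End Notions.

(* Main.v *)
Require Import Defs.
From Stdlib Require Import List Classical.

Notation "x <== y" := (le _ x y) (at level 70).
Notation "x ** y" := (mul _ x y) (at level 40, left associativity).

Lemma sup_ext (L : mult_lattice) (S T : L -> Prop) :
  (forall x, S x <-> T x) -> sup L S = sup L T.
Proof.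
  intros H; apply le_antisym; apply sup_least; intros x Hx; apply sup_ub; apply H; exact Hx.
Qed.

Lemma join_ub1 (L : mult_lattice) (x y : L) : x <== ljoin L x y.
Proof. apply sup_ub; auto. Qed.
Lemma join_ub2 (L : mult_lattice) (x y : L) : y <== ljoin L x y.
Proof. apply sup_ub; auto. Qed.
Lemma join_least (L : mult_lattice) (x y z : L) : x <== z -> y <== z -> ljoin L x y <== z.
Proof. intros; apply sup_least; intros t [->| ->]; auto. Qed.
Lemma meet_lb1 (L : mult_lattice) (x y : L) : lmeet L x y <== x.
Proof. apply sup_least; intros t [H _]; auto. Qed.
Lemma meet_lb2 (L : mult_lattice) (x y : L) : lmeet L x y <== y.
Proof. apply sup_least; intros t [_ H]; auto. Qed.
Lemma meet_glb (L : mult_lattice) (x y z : L) : z <== x -> z <== y -> z <== lmeet L x y.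
Proof. intros; apply sup_ub; auto. Qed.

Lemma mul_join (L : mult_lattice) (m a b : L) :
  m ** ljoin L a b = ljoin L (m ** a) (m ** b).
Proof.
  unfold ljoin; rewrite mul_sup; apply sup_ext; intros z; split.
  - intros [s [[-> | ->] ->]]; auto.
  - intros [-> | ->]; eauto.
Qed.

Lemma join_le_eq (L : mult_lattice) (a b : L) : a <== b -> ljoin L a b = b.
Proof.
  intros H; apply le_antisym; [apply join_least; auto using le_refl | apply join_ub2].
Qed.

Lemma mul_mono_r (L : mult_lattice) (m a b : L) : a <== b -> m ** a <== m ** b.
Proof.
  intros H; rewrite <- (join_le_eq L a b H), mul_join; apply join_ub1.
Qed.
Lemma mul_mono_l (L : mult_lattice) (m a b : L) : a <== b -> a ** m <== b ** m.
Proof. intros H; rewrite (mulC L a), (mulC L b); apply mul_mono_r; auto. Qed.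
Lemma mul_mono (L : mult_lattice) (a b c d : L) : a <== b -> c <== d -> a ** c <== b ** d.
Proof.
  intros; apply le_trans with (b ** c); [apply mul_mono_l | apply mul_mono_r]; auto.
Qed.
Lemma mul1r (L : mult_lattice) (x : L) : x ** one L = x.
Proof. rewrite mulC; apply mul1. Qed.
Lemma mul_le_l (L : mult_lattice) (x y : L) : x ** y <== x.
Proof. rewrite <- (mul1r L x) at 2; apply mul_mono_r, one_top. Qed.
Lemma mul_le_r (L : mult_lattice) (x y : L) : x ** y <== y.
Proof. rewrite mulC; apply mul_le_l. Qed.

Lemma res_adj (L : mult_lattice) (a z q : L) : a <== res L z q <-> a ** q <== z.
Proof.
  split.
  - intros H. apply le_trans with (res L z q ** q); [apply mul_mono_l; auto|].
    unfold res; rewrite mulC, mul_sup. apply sup_least.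
    intros t [s [Hs ->]]; rewrite mulC; auto.
  - intros H; apply sup_ub; auto.
Qed.

Lemma res_self (L : mult_lattice) (z q : L) : res L z q ** q <== z.
Proof. apply res_adj, le_refl. Qed.

Lemma sup_empty (L : mult_lattice) (S : L -> Prop) : (forall x, ~ S x) -> sup L S = zero L.
Proof.
  intros H; apply le_antisym; [apply sup_least; intros x Hx; destruct (H x Hx) | apply zero_bot].
Qed.

Lemma mul0 (L : mult_lattice) (x : L) : x ** zero L = zero L.
Proof.
  assert (E : zero L = sup L (fun _ => False)) by (symmetry; apply sup_empty; auto).
  rewrite E at 1. rewrite mul_sup; apply sup_empty; intros y [s [[] _]].
Qed.
Lemma mul0l (L : mult_lattice) (x : L) : zero L ** x = zero L.
Proof. rewrite mulC; apply mul0. Qed.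

Lemma le_zero (L : mult_lattice) (x : L) : x <== zero L -> x = zero L.
Proof. intros; apply le_antisym; auto using zero_bot. Qed.

Lemma cancel (L : mult_lattice) (p u v : L) :
  lattice_domain L -> principal L p -> p <> zero L -> u ** p <== v ** p -> u <== v.
Proof.
  intros [_ Hd] [_ Hj] Hp H.
  assert (Hr : res L (zero L) p <== zero L).
  { apply sup_least; intros a Ha. destruct (Hd a p Ha) as [H1|H1]; auto.
    destruct Hp; apply le_zero; auto. }
  assert (H2 : u <== ljoin L v (res L (zero L) p)).
  { rewrite Hj. apply res_adj. eapply le_trans; [exact H|apply join_ub1]. }
  eapply le_trans; [exact H2|]. apply join_least; [apply le_refl|].
  eapply le_trans; [exact Hr| apply zero_bot].
Qed.

Lemma res_res (L : mult_lattice) (z p q : L) : res L z (p ** q) = res L (res L z q) p.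
Proof.
  apply le_antisym.
  - apply res_adj, res_adj. rewrite <- mulA. apply res_self.
  - apply res_adj. rewrite mulA. apply (proj1 (res_adj _ _ _ _)).
    apply (proj1 (res_adj _ _ _ _)). apply le_refl.
Qed.

Lemma prod_principal (L : mult_lattice) (p q : L) :
  principal L p -> principal L q -> principal L (p ** q).
Proof.
  intros [Mp Jp] [Mq Jq]; split; intros y z.
  - rewrite mulA, Mq, Mp, <- res_res, <- mulA; reflexivity.
  - rewrite res_res, Jp, Jq, <- res_res, <- mulA; reflexivity.
Qed.

Lemma mulAC (L : mult_lattice) (x y z : L) : x ** y ** z = x ** z ** y.
Proof. rewrite <- mulA, (mulC L y z), mulA; reflexivity. Qed.

Lemma factor_principal (L : mult_lattice) (a d p : L) :
  lattice_domain L -> principal L p -> p <> zero L -> a ** d = p -> principal L a.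
Proof.
  intros Hdom Pp Hp E. pose proof Pp as [Mp Jp]. split; intros y z.
  - apply le_antisym.
    + set (w := lmeet L y (z ** a)).
      assert (Hwa : w <== a) by (eapply le_trans; [apply meet_lb2| apply mul_le_r]).
      set (s := res L (w ** d) p).
      assert (Hs : w ** d = s ** p).
      { specialize (Mp (w ** d) (one L)). rewrite mul1 in Mp.
        assert (E1 : lmeet L (w ** d) p = w ** d).
        { apply le_antisym; [apply meet_lb1| apply meet_glb; [apply le_refl|]].
          rewrite <- E; apply mul_mono_l; auto. }
        assert (E2 : lmeet L s (one L) = s).
        { apply le_antisym; [apply meet_lb1| apply meet_glb; [apply le_refl| apply one_top]]. }
        rewrite E1 in Mp; rewrite Mp; fold s; rewrite E2; reflexivity. }
      assert (Hws : w ** p = s ** a ** p).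
      { rewrite <- E at 1. rewrite mulA, mulAC, Hs, mulAC; reflexivity. }
      assert (H1 : w <== s ** a).
      { apply (cancel L p); auto; rewrite Hws; apply le_refl. }
      assert (H2 : s ** a <== w).
      { apply (cancel L p); auto; rewrite Hws; apply le_refl. }
      eapply le_trans; [exact H1|]. apply mul_mono_l. apply meet_glb.
      * apply res_adj. eapply le_trans; [exact H2| apply meet_lb1].
      * apply (cancel L p); auto. rewrite <- Hs, <- E, mulA.
        apply mul_mono_l. eapply le_trans; [apply meet_lb2| apply le_refl].
    + apply meet_glb.
      * eapply le_trans; [apply mul_mono_l, meet_lb1| apply res_self].
      * apply mul_mono_l, meet_lb2.
  - apply le_antisym.
    + apply join_least.
      * apply res_adj, join_ub1.
      * apply res_adj. eapply le_trans; [apply res_self| apply join_ub2].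
    + set (t := res L (ljoin L (y ** a) z) a).
      assert (Ht : t <== ljoin L y (res L (z ** d) p)).
      { rewrite Jp. apply res_adj. rewrite <- E, mulA.
        eapply le_trans; [apply mul_mono_l, res_self|].
        rewrite mulC, mul_join, (mulC L d (y ** a)), (mulC L d z), <- mulA.
        apply le_refl. }
      eapply le_trans; [exact Ht|]. apply join_least; [apply join_ub1|].
      eapply le_trans; [|apply join_ub2]. apply res_adj.
      apply (cancel L p); auto. rewrite mulAC.
      eapply le_trans; [apply mul_mono_l, res_self|].
      rewrite <- mulA, (mulC L d a), E; apply le_refl.
Qed.

Lemma zero_principal (L : mult_lattice) : principal L (zero L).
Proof.
  assert (R : forall z : L, res L z (zero L) = one L).
  { intros z; apply le_antisym; [apply one_top|]. apply res_adj; rewrite mul0; apply zero_bot. }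
  split; intros y z.
  - rewrite !mul0; apply le_antisym; [apply meet_lb2| apply zero_bot].
  - rewrite !R. apply le_antisym; [apply one_top| apply join_ub2].
Qed.

Lemma meet_le_eq (L : mult_lattice) (a b : L) : a <== b -> lmeet L a b = a.
Proof. intros; apply le_antisym; [apply meet_lb1| apply meet_glb; auto using le_refl]. Qed.

Lemma meet_div (L : mult_lattice) (u x : L) : principal L u -> x <== u -> res L x u ** u = x.
Proof.
  intros [Mu _] H. specialize (Mu x (one L)). rewrite mul1, meet_le_eq in Mu by auto.
  rewrite (meet_le_eq L _ (one L)) in Mu by apply one_top. auto.
Qed.

Lemma mul_nz (L : mult_lattice) (x y : L) :
  lattice_domain L -> x <> zero L -> y <> zero L -> x ** y <> zero L.
Proof.
  intros [_ Hd] Hx Hy E. destruct (Hd x y) as [H|H].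
  - rewrite E; apply le_refl.
  - apply Hx, le_zero; auto.
  - apply Hy, le_zero; auto.
Qed.

Lemma two_principal (L : mult_lattice) (x y : L) :
  lattice_domain L -> sharp L -> principal L x -> principal L y -> principal L (ljoin L x y).
Proof.
  intros Hdom Hsh Px Py.
  destruct (classic (x = zero L)) as [Hx|Hx].
  { rewrite Hx, join_le_eq by apply zero_bot; auto. }
  destruct (classic (y = zero L)) as [Hy|Hy].
  { rewrite Hy. replace (ljoin L x (zero L)) with x; auto.
    apply le_antisym; [apply join_ub1| apply join_least; auto using le_refl, zero_bot]. }
  set (c := ljoin L x y).
  assert (Pxy : principal L (x ** y)) by (apply prod_principal; auto).
  assert (Nxy : x ** y <> zero L) by (apply mul_nz; auto).
  destruct (Hsh c (res L (x ** y) c) (x ** y)) as [u [w [Hcu [Hw Euw]]]].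
  { rewrite mulC; apply res_self. }
  assert (Pu : principal L u) by (apply (factor_principal L u w (x ** y)); auto).
  assert (Nu : u <> zero L).
  { intros E; apply Hx, le_zero. rewrite <- E. eapply le_trans; [apply join_ub1| exact Hcu]. }
  assert (Hxu : x <== u) by (eapply le_trans; [apply join_ub1| exact Hcu]).
  assert (Hyu : y <== u) by (eapply le_trans; [apply join_ub2| exact Hcu]).
  set (x' := res L x u). set (y' := res L y u).
  assert (Ex : x' ** u = x) by (apply meet_div; auto).
  assert (Ey : y' ** u = y) by (apply meet_div; auto).
  assert (Px' : principal L x') by (apply (factor_principal L x' u x); auto).
  assert (Py' : principal L y') by (apply (factor_principal L y' u y); auto).
  assert (Nx' : x' <> zero L) by (intros E; apply Hx; rewrite <- Ex, E, mul0l; auto).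
  assert (Ny' : y' <> zero L) by (intros E; apply Hy; rewrite <- Ey, E, mul0l; auto).
  assert (Cop : lmeet L x' y' <== x' ** y').
  { set (r := lmeet L x' y').
    assert (Hrx : r ** u <== x) by (rewrite <- Ex; apply mul_mono_l, meet_lb1).
    assert (Hry : r ** u <== y) by (rewrite <- Ey; apply mul_mono_l, meet_lb2).
    assert (Hrw : r ** u <== w).
    { eapply le_trans; [|exact Hw]. apply res_adj. unfold c; rewrite mul_join.
      apply join_least.
      - rewrite (mulC L x y). apply mul_mono_l; auto.
      - apply mul_mono_l; auto. }
    apply (cancel L u); auto. apply (cancel L u); auto.
    eapply le_trans; [apply mul_mono_l, Hrw|].
    rewrite (mulC L w u), <- Euw, <- Ex, <- Ey.
    rewrite !mulA, (mulAC L x' u y'); apply le_refl. }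
  assert (Rx : forall t : L, t ** x' <== y' -> t <== y').
  { intros t Ht. apply (cancel L x'); auto. eapply le_trans; [|rewrite mulC; exact Cop].
    apply meet_glb; auto. apply mul_le_r. }
  assert (Ry : forall t : L, t ** y' <== x' -> t <== x').
  { intros t Ht. apply (cancel L y'); auto. eapply le_trans; [|exact Cop].
    apply meet_glb; auto. apply mul_le_r. }
  set (e := ljoin L x' y').
  assert (Ee : e ** e <== ljoin L x' (y' ** y')).
  { unfold e at 2; rewrite mul_join. apply join_least.
    - eapply le_trans; [apply mul_le_r| apply join_ub1].
    - unfold e; rewrite mulC, mul_join. apply join_least.
      + eapply le_trans; [apply mul_le_r| apply join_ub1].
      + apply join_ub2. }
  destruct (Hsh e e (ljoin L (x' ** x') y')) as [b1 [b2 [H1 [H2 Eb]]]].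
  { unfold e at 2; rewrite mul_join. apply join_least.
    - unfold e; rewrite mulC, mul_join. apply join_least; [apply join_ub1|].
      eapply le_trans; [apply mul_le_r| apply join_ub2].
    - eapply le_trans; [apply mul_le_r| apply join_ub2]. }
  assert (Hbe : forall b, b ** x' <== ljoin L (x' ** x') y' -> b <== e).
  { intros b Hb. assert (Hb' : b <== res L (ljoin L (x' ** x') y') x') by (apply res_adj; auto).
    destruct Px' as [_ Jx']. rewrite <- Jx' in Hb'.
    eapply le_trans; [exact Hb'|]. apply join_least; [apply join_ub1|].
    eapply le_trans; [|apply join_ub2]. apply Rx, res_self. }
  assert (Hx'e : x' <== e) by apply join_ub1.
  assert (Hb1 : b1 <== e).
  { apply Hbe. rewrite Eb. apply mul_mono_r. eapply le_trans; eauto. }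
  assert (Hb2 : b2 <== e).
  { apply Hbe. rewrite Eb, (mulC L b1 b2). apply mul_mono_r. eapply le_trans; eauto. }
  assert (Hy'2 : y' <== ljoin L x' (y' ** y')).
  { eapply le_trans; [apply join_ub2|]. rewrite Eb.
    eapply le_trans; [apply mul_mono; eauto| exact Ee]. }
  assert (He1 : one L <== e).
  { destruct Py' as [_ Jy']. 
    assert (H3 : one L <== res L (ljoin L (y' ** y') x') y').
    { apply res_adj. rewrite mul1. eapply le_trans; [exact Hy'2|].
      apply join_least; [apply join_ub2| apply join_ub1]. }
    rewrite <- Jy' in H3. eapply le_trans; [exact H3|]. apply join_least.
    - apply join_ub2.
    - eapply le_trans; [|apply join_ub1]. apply Ry, res_self. }
  assert (Ec : c = u).
  { unfold c. rewrite <- Ex, <- Ey, (mulC L x' u), (mulC L y' u), <- mul_join.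
    fold e. replace e with (one L) by (apply le_antisym; auto using one_top).
    apply mul1r. }
  rewrite Ec; auto.
Qed.

Lemma list_principal (L : mult_lattice) (T : list L) :
  lattice_domain L -> sharp L -> (forall t, In t T -> principal L t) ->
  principal L (sup L (fun t => In t T)).
Proof.
  intros Hd Hs. induction T as [|a T IH]; intros HT.
  - rewrite sup_empty by (intros x []); apply zero_principal.
  - replace (sup L (fun t => In t (a :: T))) with (ljoin L a (sup L (fun t => In t T))).
    + apply two_principal; auto. apply HT; left; auto.
      apply IH; intros t Ht; apply HT; right; auto.
    + apply le_antisym.
      * apply join_least; [apply sup_ub; left; auto|].
        apply sup_least; intros t Ht; apply sup_ub; right; auto.
      * apply sup_least; intros t [<-|Ht]; [apply join_ub1|].
        eapply le_trans; [|apply join_ub2]; apply sup_ub; auto.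
Qed.

Theorem proposition3p5 (L : mult_lattice) :
  C_lattice L -> lattice_domain L -> principally_generated L ->
  sharp L -> prufer L.
Proof.
  intros _ Hd Hpg Hs c Hc.
  destruct (Hpg c) as [S [HS Ec]].
  destruct (Hc S) as [T [HT Hle]]; [rewrite <- Ec; apply le_refl|].
  replace c with (sup L (fun t => In t T)).
  - apply list_principal; auto.
  - apply le_antisym; auto. apply sup_least; intros t Ht. rewrite Ec; apply sup_ub; auto.
Qed.
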